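(* Let $V$ be a finite set and $n\ge 1$ an integer. The functions $m_G$, as $G$ ranges over all multigraphs on vertex set $V$ (self-loops allowed) with $|E(G)|\le n$, are linearly independent as functions of $(d_u)_{u\in V}\in(\mathbb{R}^n)^V$.
   Context: A multigraph $G$ on $V$ is a finite multiset $E(G)$ of edges $\{u,w\}$ with $u,w\in V$, where $u=w$ (a self-loop) is allowed. For vectors $d_u\in\mathbb{R}^n$ ($u\in V$), $m_G=\prod_{\{u,w\}\in E(G)}\langle d_u,d_w\rangle$, with multiplicity, where a self-loop at $u$ contributes the factor $\langle d_u,d_u\rangle$. *)

(* Defs.v *)
From mathcomp Require Import all_boot all_order all_algebra.
From mathcomp Require Import reals.
Set Implicit Arguments. Unset Strict Implicit. Unset Printing Implicit Defensive.
Import Order.TTheory GRing.Theory Num.Theory.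
Local Open Scope ring_scope.

(* An (unordered) edge {u,w} of a multigraph on V, self-loops allowed, is
   encoded as the nonempty set A := [set u; w] : {set V} (so #|A| = 1 for a
   self-loop, #|A| = 2 otherwise).  A multigraph G is encoded by its
   multiplicity function G : {set V} -> nat; it is a genuine multigraph when
   G A = 0 unless 1 <= #|A| <= 2. Multiplicities are stored in 'I_(n.+1)
   so that the (finitely many) multigraphs with at most n edges all live in
   the finite type mgraph V n. *)
Definition mgraph (V : finType) (n : nat) := {ffun {set V} -> 'I_n.+1}.

Definition is_edge (V : finType) (A : {set V}) : bool := (0 < #|A| <= 2)%N.

Definition nedges (V : finType) (n : nat) (G : mgraph V n) : nat :=
  (\sum_(A : {set V}) (G A : nat))%N.

Definition valid_mgraph (V : finType) (n : nat) (G : mgraph V n) : bool :=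
  [forall A : {set V}, (G A != 0 :> nat) ==> is_edge A] && (nedges G <= n)%N.

Definition dotp (R : realType) (n : nat) (x y : 'rV[R]_n) : R :=
  \sum_(k < n) x 0 k * y 0 k.

(* <d_u, d_w> for the edge A = {u, w}; for a self-loop A = {u} this is <d_u, d_u>. *)
Definition edge_val (R : realType) (V : finType) (n : nat)
    (d : V -> 'rV[R]_n) (A : {set V}) : R :=
  if [pick u in A] is Some u then
    let w := if [pick w in A :\ u] is Some w then w else u in
    dotp (d u) (d w)
  else 0.

Definition mG (R : realType) (V : finType) (n : nat) (G : mgraph V n)
    (d : V -> 'rV[R]_n) : R :=
  \prod_(A : {set V} | is_edge A) edge_val d A ^+ (G A : nat).

(* Main.v *)
Require Import Defs.
From mathcomp Require Import all_boot all_order all_algebra.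
From mathcomp Require Import reals.
Import Order.TTheory GRing.Theory Num.Theory.
Set Implicit Arguments. Unset Strict Implicit.
Local Open Scope ring_scope.

Lemma U_lemma (R : realType) (D : nat) (alpha : 'I_D -> R) (a : R) :
  (forall t, a <= t -> \sum_(j < D) alpha j * t ^+ j = 0) -> forall j, alpha j = 0.
Proof.
move=> H j.
pose p : {poly R} := \sum_(i < D) alpha i *: 'X^i.
have pE : forall t, p.[t] = \sum_(i < D) alpha i * t ^+ i.
  by move=> t; rewrite horner_sum; apply: eq_bigr => i _; rewrite hornerZ hornerXn.
have cE : p`_j = alpha j.
  rewrite coef_sum (bigD1 j) //= coefZ coefXn eqxx mulr1 big1 ?addr0 // => i Hi.
  by rewrite coefZ coefXn eq_sym (inj_eq val_inj) (negbTE Hi) mulr0.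
have p0 : p = 0.
  apply/eqP; apply/negPn/negP => pn0.
  pose rs := [seq (`|a| + i%:R) | i <- iota 0 (size p)].
  have Ha : all (root p) rs.
    apply/allP => x /mapP [i _ ->]; rewrite /root pE H //.
    by rewrite (le_trans (ler_norm a)) // lerDl ler0n.
  have Hu : uniq rs.
    rewrite map_inj_uniq ?iota_uniq // => x y /addrI /eqP; rewrite eqr_nat => /eqP.
    done.
  by move: (max_poly_roots pn0 Ha Hu); rewrite size_map size_iota ltnn.
by rewrite -cE p0 coef0.
Qed.
Definition ext (R : realType) (V : finType) (k : nat) (d0 : V -> 'rV[R]_k)
  (A : {set V}) (s : R) : V -> 'rV[R]_k.+1 :=
  fun u => \row_(j < k.+1)
    (if unlift ord_max j is Some i then d0 u 0 i else if u \in A then s else 0).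

Lemma ext_dot (R : realType) (V : finType) (k : nat) (d0 : V -> 'rV[R]_k)
  (A : {set V}) (s : R) (u w : V) :
  dotp (ext d0 A s u) (ext d0 A s w) =
  dotp (d0 u) (d0 w) + (if u \in A then s else 0) * (if w \in A then s else 0).
Proof.
rewrite /dotp big_ord_recr /= !mxE unlift_none; congr (_ + _).
apply: eq_bigr => i _; rewrite !mxE.
have -> : widen_ord (leqnSn k) i = lift ord_max i by apply: val_inj; rewrite /= /bump leqNgt ltn_ord.
by rewrite liftK.
Qed.

Lemma edge_pick (R : realType) (V : finType) (B : {set V}) : is_edge B ->
  exists u w, [/\ u \in B, w \in B, (forall x, x \in B -> x = u \/ x = w) &
     forall k (d : V -> 'rV[R]_k), edge_val d B = dotp (d u) (d w)].
Proof.
rewrite /is_edge => /andP [B0 B2].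
rewrite /edge_val; case: pickP => [u Hu | H0]; last first.
  by move: B0; rewrite eq_card0.
case: pickP => [w Hw | H1].
- exists u, w; split => //.
  + by move: Hw; rewrite in_setD1 => /andP [].
  + move=> x Hx; case: (eqVneq x u) => [->|xu]; first by left.
    right; have : (#|B :\ u| <= 1)%N.
      by move: B2; rewrite (cardsD1 u B) Hu.
    move/card_le1_eqP; apply => //; by rewrite in_setD1 xu.
- exists u, u; split => //.
  move=> x Hx; left; case: (eqVneq x u) => // xu.
  by move: (H1 x); rewrite in_setD1 xu Hx.
Qed.

Definition mGk (R : realType) (V : finType) (N k : nat) (H : mgraph V N)
    (d : V -> 'rV[R]_k) : R :=
  \prod_(A : {set V} | is_edge A) edge_val d A ^+ (H A : nat).

Definition validk (V : finType) (N k : nat) (H : mgraph V N) : bool :=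
  [forall A : {set V}, (H A != 0 :> nat) ==> is_edge A] && (nedges H <= k)%N.

Definition setA (V : finType) (N : nat) (H : mgraph V N) (A : {set V}) (j : 'I_N.+1)
  : mgraph V N := [ffun B => if B == A then j else H B].

Lemma setA_at (V : finType) (N : nat) (H : mgraph V N) A j : setA H A j A = j.
Proof. by rewrite ffunE eqxx. Qed.

Lemma setA_setA (V : finType) (N : nat) (H : mgraph V N) A x y :
  setA (setA H A x) A y = setA H A y.
Proof. by apply/ffunP => B; rewrite !ffunE; case: eqP. Qed.

Lemma setA_id (V : finType) (N : nat) (H : mgraph V N) A x :
  H A = x -> setA H A x = H.
Proof. by move=> <-; apply/ffunP => B; rewrite !ffunE; case: eqP => // ->. Qed.

Lemma nedges_setA (V : finType) (N : nat) (H : mgraph V N) A j :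
  (nedges (setA H A j) + H A = nedges H + j)%N.
Proof.
rewrite /nedges (bigD1 A) //= [in RHS](bigD1 A) //= setA_at.
rewrite (eq_bigr (fun B => (H B : nat))); last by move=> B /negbTE BA; rewrite ffunE BA.
by rewrite -!addnA addnC -!addnA addnC -addnA [(_ + j)%N]addnC.
Qed.

Lemma mGk_ext (R : realType) (V : finType) (N k : nat) (d0 : V -> 'rV[R]_k)
  (A : {set V}) (s : R) (H : mgraph V N) :
  is_edge A -> (forall B, is_edge B -> B \proper A -> (H B : nat) = 0%N) ->
  mGk H (ext d0 A s) = (edge_val d0 A + s ^+ 2) ^+ (H A) * mGk (setA H A ord0) d0.
Proof.
move=> eA hB.
rewrite /mGk (bigD1 A eA) [X in _ = _ * X](bigD1 A eA) /= setA_at expr0 mul1r.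
congr (_ * _).
  have [u [w [uA wA _ E]]] := @edge_pick R _ _ eA.
  by rewrite !E ext_dot uA wA expr2.
apply: eq_bigr => B /andP [eB BA]; rewrite ffunE (negbTE BA).
have [u [w [uB wB Bx E]]] := @edge_pick R _ _ eB.
rewrite !E ext_dot.
case: (boolP (u \in A)) => uA; case: (boolP (w \in A)) => wA;
  rewrite ?mul0r ?mulr0 ?addr0 //.
have BsA : B \subset A by apply/subsetP => x /Bx [->|->].
by rewrite hB ?expr0 // properEneq BA BsA.
Qed.

Lemma extraction (R : realType) (V : finType) (N k : nat) (c : mgraph V N -> R)
  (A : {set V}) :
  (forall d : V -> 'rV[R]_k.+1, \sum_H c H * mGk H d = 0) ->
  is_edge A ->
  (forall B, is_edge B -> B \proper A -> forall H : mgraph V N, (0 < H B)%N -> c H = 0) ->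
  forall (d0 : V -> 'rV[R]_k) (j : 'I_N.+1),
    \sum_(H : mgraph V N | H A == j) c H * mGk (setA H A ord0) d0 = 0.
Proof.
move=> hs eA hsub d0 j.
pose alpha (j : 'I_N.+1) := \sum_(H : mgraph V N | H A == j) c H * mGk (setA H A ord0) d0.
apply: (@U_lemma R N.+1 alpha (edge_val d0 A)) => t ht.
transitivity (\sum_H c H * mGk H (ext d0 A (Num.sqrt (t - edge_val d0 A))));
  last exact: hs.
rewrite (partition_big (fun H : mgraph V N => H A) predT) //=.
apply: eq_bigr => i _; rewrite /alpha mulr_suml; apply: eq_bigr => H /eqP HA.
case: (eqVneq (c H) 0) => [->|cH]; first by rewrite !mul0r.
rewrite mGk_ext //; last first.
  move=> B eB pB; apply/eqP; rewrite -leqn0 leqNgt; apply/negP => /(hsub B eB pB H).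
  by apply/eqP.
rewrite sqr_sqrtr ?subr_ge0 // addrC subrK HA.
by rewrite [_ ^+ _ * _]mulrC mulrA.
Qed.

Lemma zero_case (R : realType) (V : finType) (N k : nat) (c : mgraph V N -> R)
  (d : V -> 'rV[R]_k) :
  (forall H, c H != 0 -> forall A, (H A : nat) = 0%N) ->
  \sum_H c H * mGk H d = 0 -> forall H, c H = 0.
Proof.
move=> hz hs H; case: (eqVneq (c H) 0) => // cH.
have m1 : mGk H d = 1 by rewrite /mGk big1 // => A _; rewrite hz // expr0.
move: hs; rewrite (bigD1 H) //= big1 ?addr0 ?m1 ?mulr1; first by move/eqP; rewrite (negbTE cH).
move=> H' nH'; case: (eqVneq (c H') 0) => [->|cH']; first by rewrite mul0r.
exfalso; move/eqP: nH'; apply; apply/ffunP => A; apply: val_inj.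
by move: (hz _ cH' A) (hz _ cH A) => /= -> ->.
Qed.

Definition Stmt (R : realType) (V : finType) (N k : nat) :=
  forall c : mgraph V N -> R, (forall H, ~~ validk k H -> c H = 0) ->
  (forall d : V -> 'rV[R]_k, \sum_H c H * mGk H d = 0) -> forall H, c H = 0.

Lemma Stmt0 (R : realType) (V : finType) (N : nat) : Stmt R V N 0.
Proof.
move=> c hv hs; apply: (zero_case _ (hs (fun _ => 0))) => H cH A.
case: (boolP (validk 0 H)) => [/andP [_ hn] | nv]; last by move: cH; rewrite hv ?eqxx.
by move: hn; rewrite leqn0 /nedges sum_nat_eq0 => /forallP /(_ A) /eqP.
Qed.

Lemma StmtS (R : realType) (V : finType) (N k : nat) :
  Stmt R V N k -> Stmt R V N k.+1.
Proof.
move=> IH c hv hs.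
have edges : forall m A, is_edge A -> (#|A| <= m)%N ->
    forall H : mgraph V N, (0 < H A)%N -> c H = 0.
  elim=> [|m IHm] A eA.
    by case/andP: eA => h _ /(leq_trans h).
  move=> Am H HA.
  have hsub : forall B, is_edge B -> B \proper A ->
      forall H : mgraph V N, (0 < H B)%N -> c H = 0.
    move=> B eB pB; apply: IHm eB _.
    by rewrite -ltnS (leq_trans (proper_card pB) Am).
  have ex := extraction hs eA hsub.
  pose j := H A.
  pose c' (H' : mgraph V N) := if H' A == ord0 then c (setA H' A j) else 0.
  have := IH c' _ _ (setA H A ord0).
  rewrite /c' setA_at eqxx setA_setA setA_id //; apply.
    move=> H'; case: eqP => // /eqP H'A nv.
    case: (eqVneq (c (setA H' A j)) 0) => // cne; exfalso.
    have vv : validk k.+1 (setA H' A j).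
      by apply/negPn/negP => /hv; apply/eqP.
    move/negP: nv; apply; case/andP: vv => /forallP hf hn.
    apply/andP; split.
      apply/forallP => B; apply/implyP => HB.
      have BA : B != A by apply: contraNneq HB => ->; rewrite (eqP H'A).
      by have := hf B; rewrite ffunE (negbTE BA) HB.
    have := nedges_setA H' A j; rewrite (eqP H'A) addn0 => E.
    by rewrite -ltnS (leq_trans _ hn) // E -{1}(addn0 (nedges H')) ltn_add2l.
  move=> d0.
  transitivity (\sum_(H' : mgraph V N | H' A == ord0) c (setA H' A j) * mGk H' d0).
    rewrite [RHS]big_mkcond; apply: eq_bigr => H' _; rewrite /c'.
    by case: ifP => _ //; rewrite mul0r.
  rewrite -[X in _ = X](ex d0 j).
  rewrite [RHS](reindex_onto (fun H' => setA H' A j) (fun H => setA H A ord0)) /=; last first.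
    by move=> H1 /eqP H1A; rewrite setA_setA setA_id.
  apply: eq_big => H'.
    rewrite setA_at eqxx /= setA_setA.
    by apply/idP/idP => /eqP; [move=> H1; apply/eqP; rewrite setA_id | move=> <-; rewrite setA_at].
  by move=> /eqP H'A; rewrite setA_setA [setA H' A ord0]setA_id.
apply: (zero_case _ (hs (fun _ => 0))) => H cH A.
case: (boolP (is_edge A)) => eA.
  apply/eqP; rewrite -leqn0 leqNgt; apply/negP => HA.
  by move: cH; rewrite (edges #|A| A eA (leqnn _) H HA) eqxx.
case: (boolP (validk k.+1 H)) => [/andP [/forallP hf _] | nv]; last first.
  by move: cH; rewrite hv ?eqxx.
by apply/eqP; move: (hf A); rewrite (negbTE eA) implybF negbK.
Qed.

Lemma allStmt (R : realType) (V : finType) (N k : nat) : Stmt R V N k.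
Proof. by elim: k => [|k IH]; [exact: Stmt0 | exact: StmtS]. Qed.

Theorem mainTheorem1 (R : realType) (V : finType) (n : nat) (hn : (0 < n)%N)
    (c : mgraph V n -> R) :
  (forall d : V -> 'rV[R]_n,
      \sum_(G : mgraph V n | valid_mgraph G) c G * mG G d = 0) ->
  forall G : mgraph V n, valid_mgraph G -> c G = 0.
Proof.
move=> hsum G vG.
pose c' H := if valid_mgraph H then c H else 0.
have := @allStmt R V n n c' _ _ G; rewrite /c' vG; apply.
  by move=> H; case: ifP => // hv; rewrite /validk -/(valid_mgraph H) hv.
move=> d; rewrite -[X in _ = X](hsum d) [RHS]big_mkcond; apply: eq_bigr => H _.
by case: ifP => _ //; rewrite mul0r.
Qed.
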